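(* For all positive integers $\alpha,\beta,p$, $C(\alpha,\beta,p)\leq C_{2D}(\alpha,\beta,p)$.
   Context: Memory cells are binary; there are $n$ cells and cell-state vectors lie in $\{0,1\}^n$. For a real $R\ge 0$ write $[1:2^{nR}]=\{1,2,\ldots,\lfloor 2^{nR}\rfloor\}$. A code on $n$ cells consists, for each write $i\ge 1$, of a real $R_i\ge 0$ (the individual rate), an encoder $\mathcal{E}_i:[1:2^{nR_i}]\times\{0,1\}^n\to\{0,1\}^n$ and a decoder $\mathcal{D}_i:\{0,1\}^n\to[1:2^{nR_i}]$ with $\mathcal{D}_i(\mathcal{E}_i(m,\mathbf{u}))=m$ for all $m,\mathbf{u}$ (the encoder and decoder may depend on the write index $i$). Starting from the all-zero state $\mathbf{v}_0=\mathbf{0}$, a message sequence $m_1,m_2,\ldots$ produces states $\mathbf{v}_i=\mathcal{E}_i(m_i,\mathbf{v}_{i-1})=(v_{i,1},\ldots,v_{i,n})$. The rewrite cost of a write is the Hamming distance between consecutive states. For positive integers $\alpha,\beta,p$, the code is $(\alpha,\beta,p)$-constrained if for every message sequence, every $i\ge 0$ and every $1\le j\le n-\beta+1$, $$\big|\{(k,\ell): v_{i+k,j+\ell}\neq v_{i+k+1,j+\ell},\ 0\le k<\alpha,\ 0\le \ell<\beta\}\big|\le p,$$ i.e. over any $\alpha$ consecutive rewrites and any $\beta$ contiguous cells the total rewrite cost is at most $p$. The rate of the code is $R=\lim_{m\to\infty}\frac1m\sum_{i=1}^m R_i$. $C_n(\alpha,\beta,p)$ is the supremum of rates of $(\alpha,\beta,p)$-constrained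 codes on $n$ cells, and the $(\alpha,\beta,p)$-capacity is $C(\alpha,\beta,p)=\lim_{n\to\infty}C_n(\alpha,\beta,p)$. An $m\times n$ binary array is an $(a,b,p)$-array if every $a\times b$ sub-array formed by $a$ consecutive rows and $b$ consecutive columns contains at most $p$ ones. If $c(m,n)$ is the number of $m\times n$ $(a,b,p)$-arrays, then $C_{2D}(a,b,p)=\lim_{m,n\to\infty}\frac{\log_2 c(m,n)}{mn}$. *)

(* Defs.v *)
From mathcomp Require Import all_boot.
From Stdlib Require Import Reals.

Set Implicit Arguments.
Unset Strict Implicit.
Unset Printing Implicit Defensive.

Definition state (n : nat) := {ffun 'I_n -> bool}.
Definition zero_state (n : nat) : state n := [ffun => false].

Definition in_msg_range (n : nat) (Ri : R) (m : nat) : Prop :=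
  (1 <= m)%N /\ (INR m <= Rpower 2 (INR n * Ri))%R.

(* A (candidate) code on n cells: individual rates R_i, encoders E_i and
   decoders D_i, indexed by the write number i >= 1 (index 0 unused). *)
Record code (n : nat) := Code {
  rate_i : nat -> R;
  enc : nat -> nat -> state n -> state n;
  dec : nat -> state n -> nat }.

Definition code_valid (n : nat) (c : code n) : Prop :=
  forall i, (1 <= i)%N ->
    (0 <= rate_i c i)%R /\
    (forall v, in_msg_range n (rate_i c i) (dec c i v)) /\
    (forall m u, in_msg_range n (rate_i c i) m -> dec c i (enc c i m u) = m).

Definition valid_msgs (n : nat) (c : code n) (ms : nat -> nat) : Prop :=
  forall i, (1 <= i)%N -> in_msg_range n (rate_i c i) (ms i).

Fixpoint states (n : nat) (c : code n) (ms : nat -> nat) (i : nat) : state n :=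
  match i with
  | 0 => zero_state n
  | i'.+1 => enc c i'.+1 (ms i'.+1) (states c ms i')
  end.

(* (alpha,beta,p)-constrained: over any alpha consecutive rewrites and any
   beta contiguous cells (0-based start j with j + beta <= n), total
   rewrite cost <= p. *)
Definition constrained (alpha beta p n : nat) (c : code n) : Prop :=
  forall ms, valid_msgs c ms ->
  forall i j : nat, (j + beta <= n)%N ->
    (#|[set x : 'I_alpha * 'I_n |
         (j <= x.2 < j + beta)%N &&
         (states c ms (i + x.1) x.2 != states c ms (i + x.1).+1 x.2)]| <= p)%N.

(* Rate R = lim_{m -> oo} (1/m) sum_{i=1}^m R_i  (here indexed by m+1). *)
Definition has_rate (n : nat) (c : code n) (Rt : R) : Prop :=
  Un_cv (fun m => sum_f_R0 (fun k => rate_i c k.+1) m / INR m.+1)%R Rt.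

Definition constrained_rates (alpha beta p n : nat) : R -> Prop :=
  fun Rt => exists c : code n,
    code_valid c /\ constrained alpha beta p c /\ has_rate c Rt.

Definition num_arrays (a b p m n : nat) : nat :=
  #|[set A : {ffun 'I_m * 'I_n -> bool} |
     [forall i : 'I_m.+1, forall j : 'I_n.+1,
        ((i + a <= m)%N && (j + b <= n)%N) ==>
        (#|[set x : 'I_m * 'I_n |
             [&& A x, (i <= x.1 < i + a)%N & (j <= x.2 < j + b)%N]]| <= p)%N]]|.

Definition log2 (x : R) : R := (ln x / ln 2)%R.

Definition limit2 (f : nat -> nat -> R) (L : R) : Prop :=
  forall eps : R, (0 < eps)%R ->
    exists N : nat, forall m n : nat, (N <= m)%N -> (N <= n)%N ->
      (Rabs (f m n - L) < eps)%R.

(* Main.v *)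
Require Import Defs.
From mathcomp Require Import all_boot zify.
From Stdlib Require Import Reals Lra.

Definition leb_R (a b : R) : bool := if Rle_dec a b then true else false.

Lemma leb_RP a b : leb_R a b = true <-> (a <= b)%R.
Proof. rewrite /leb_R; case: Rle_dec => //. Qed.

Lemma cardI B (P : pred nat) : #|[pred k : 'I_B | P k]| = count P (iota 0 B).
Proof. rewrite -val_enum_ord count_map -size_filter cardE /enum_mem -enumT /=.
by rewrite filter_predT. Qed.

Lemma count_claim (x : R) B :
  let c := count (fun k => leb_R (INR k.+1) x) (iota 0 B) in
  c = B \/ (x < INR c.+1)%R.
Proof.
elim: B => [|B IH]; first by left.
cbv zeta in IH |- *.
rewrite -addn1 iotaD count_cat add0n.
have -> : count (fun k => leb_R (INR k.+1) x) (iota B 1) = leb_R (INR B.+1) x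
  by rewrite /= addn0.
have Hc := count_size (fun k => leb_R (INR k.+1) x) (iota 0 B).
rewrite size_iota in Hc.
move: IH Hc; set c := count _ _ => IH Hc.
case: IH => [Ec | Hlt].
- rewrite Ec /leb_R; case: Rle_dec => H.
  + by left.
  + by right; rewrite addn0; apply: Rnot_le_lt.
- have HB : (INR c.+1 <= INR B.+1)%R by apply: le_INR; apply/leP.
  rewrite /leb_R; case: Rle_dec => H; first lra.
  by right; rewrite addn0.
Qed.

Lemma count_bound (x : R) B : (1 <= x)%R -> (x <= INR B)%R ->
  (x <= 2 * INR (count (fun k => leb_R (INR k.+1) x) (iota 0 B)))%R.
Proof.
move=> H1 H2.
case: (count_claim x B) => [-> | ].
- have : (0 <= INR B)%R by apply: pos_INR. lra.
- set c := count _ _.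
  case: c => [|c'] H; first by (rewrite /= in H; lra).
  rewrite S_INR in H *; rewrite S_INR in H.
  have : (0 <= INR c')%R by apply: pos_INR. rewrite S_INR; lra.
Qed.

Lemma Rpower2_pos y : (0 < Rpower 2 y)%R.
Proof. rewrite /Rpower; apply: exp_pos. Qed.

Lemma prod_bound (g : nat -> nat) (y : nat -> R) (s : seq nat) :
  (forall i, i \in s -> (Rpower 2 (y i) <= 2 * INR (g i))%R) ->
  (Rpower 2 (foldr Rplus 0%R (map (fun i => y i - 1)%R s))
     <= INR (foldr muln 1%nat (map g s)))%R.
Proof.
elim: s => [|a s IH] H /=.
- rewrite Rpower_O; [simpl; lra | lra].
- rewrite mult_INR.
  have Ha := H a (mem_head a s).
  have Hs : (Rpower 2 (foldr Rplus 0%R (map (fun i => y i - 1)%R s)) <= INR (foldr muln 1%nat (map g s)))%R.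
    by apply: IH => i Hi; apply: H; rewrite in_cons Hi orbT.
  have -> : (y a - 1 + foldr Rplus 0%R [seq (y i - 1)%R | i <- s] =
            y a + (-(1) + foldr Rplus 0%R [seq (y i - 1)%R | i <- s]))%R by ring.
  rewrite !Rpower_plus Rpower_Ropp Rpower_1; last lra.
  have P1 := Rpower2_pos (y a).
  have P2 := Rpower2_pos (foldr Rplus 0%R [seq (y i - 1)%R | i <- s]).
  have -> : (Rpower 2 (y a) * (/ 2 * Rpower 2 (foldr Rplus 0%R [seq (y i - 1)%R | i <- s])) =
      (Rpower 2 (y a) / 2) * Rpower 2 (foldr Rplus 0%R [seq (y i - 1)%R | i <- s]))%R by field.
  apply: Rmult_le_compat; lra.
Qed.

Lemma log2_bound (S : R) (N : nat) : (Rpower 2 S <= INR N)%R -> (S <= log2 (INR N))%R.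
Proof.
move=> H.
have Hl2 : (0 < ln 2)%R by rewrite -ln_1; apply: ln_increasing; lra.
have P := Rpower2_pos S.
have Hle : (S * ln 2 <= ln (INR N))%R.
  case: (Rle_lt_or_eq_dec _ _ H) => H'.
  - have := ln_increasing _ _ P H'. rewrite /Rpower ln_exp. lra.
  - rewrite -H' /Rpower ln_exp; lra.
rewrite /log2.
apply (Rmult_le_reg_r (ln 2)); first lra.
rewrite /Rdiv Rmult_assoc Rinv_l; lra.
Qed.

Lemma foldr_plus_last (l : seq R) a : foldr Rplus a l = (foldr Rplus 0 l + a)%R.
Proof. elim: l => [|b l IH] /=; [lra | rewrite IH; lra]. Qed.

Lemma sum_iota (h : nat -> R) M :
  foldr Rplus 0%R (map h (iota 0 M.+1)) = sum_f_R0 h M.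
Proof.
elim: M => [|M IH]; first by rewrite /= Rplus_0_r.
rewrite -addn1 iotaD map_cat foldr_cat foldr_plus_last IH add0n /=.
ring.
Qed.

Lemma sum_lin (g : nat -> R) a M :
  sum_f_R0 (fun k => a * g k - 1)%R M = (a * sum_f_R0 g M - INR M.+1)%R.
Proof.
elim: M => [|M IH]; first by rewrite /=; lra.
have -> : sum_f_R0 (fun k => a * g k - 1)%R M.+1 = (sum_f_R0 (fun k => a*g k -1)%R M + (a * g M.+1 - 1))%R by [].
have -> : sum_f_R0 g M.+1 = (sum_f_R0 g M + g M.+1)%R by [].
rewrite IH (S_INR M.+1). ring.
Qed.

Lemma exists_B n (r : nat -> R) M :
  exists B, forall i, (i < M)%N -> (Rpower 2 (INR n * r i.+1) <= INR B)%R.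
Proof.
elim: M => [|M [B HB]]; first by exists 0%nat.
have [k Hk] := INR_unbounded (Rpower 2 (INR n * r M.+1)).
exists (maxn B k) => i Hi.
have H1 : (INR B <= INR (maxn B k))%R by apply: le_INR; apply/leP; apply: leq_maxl.
have H2 : (INR k <= INR (maxn B k))%R by apply: le_INR; apply/leP; apply: leq_maxr.
case: (ltngtP i M) => Hc.
- have := HB i Hc; lra.
- exfalso; lia.
- subst i; lra.
Qed.

Lemma key a' b p n (c : code n) M' :
  code_valid c -> constrained a'.+1 b p c ->
  (INR n * sum_f_R0 (fun k => rate_i c k.+1) M' - INR M'.+1
     <= log2 (INR (num_arrays a'.+1 b p M'.+1 n)))%R.
Proof.
move=> Hv Hc.
set M := M'.+1.
set r := rate_i c.
have [B HB] := exists_B n r M.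
pose x i := Rpower 2 (INR n * r i.+1).
have x_ge1 : forall i, (1 <= i)%N -> (1 <= Rpower 2 (INR n * r i))%R.
  move=> i Hi. rewrite -(Rpower_O 2); last lra.
  apply: Rle_Rpower; first lra.
  apply: Rmult_le_pos; first exact: pos_INR.
  by case: (Hv i Hi).
pose F := fun i : 'I_M => [pred k : 'I_B | leb_R (INR k.+1) (x i)].
pose msf (f : {ffun 'I_M -> 'I_B}) := fun i : nat =>
  if (0 < i <= M)%N then (f (inord i.-1)).+1 else 1%nat.
pose Af (f : {ffun 'I_M -> 'I_B}) : {ffun 'I_M * 'I_n -> bool} :=
  [ffun y : 'I_M * 'I_n => states c (msf f) y.1 y.2 != states c (msf f) y.1.+1 y.2].
have V : forall f, f \in finfun.family F -> valid_msgs c (msf f).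
  move=> f /familyP Hf i Hi; rewrite /msf.
  case: ifP => Hc1.
  - have := Hf (inord i.-1); rewrite inE /x => /leb_RP.
    rewrite inordK; last lia.
    rewrite prednK; last lia.
    by split.
  - split => //. change (INR 1) with 1%R. exact: x_ge1 i Hi.
have Hm : forall f (i : 'I_M), msf f i.+1 = (f i).+1.
  move=> f i; rewrite /msf /= ltn_ord /=. by rewrite inord_val.
have Hdec : forall f (i : 'I_M), f \in finfun.family F ->
    dec c i.+1 (states c (msf f) i.+1) = (f i).+1.
  move=> f i Hf /=.
  have [_ [_ Hd]] := Hv i.+1 (ltn0Sn i).
  rewrite Hd; first by rewrite Hm. exact: V Hf _ (ltn0Sn i).
have I : {in finfun.family F &, injective Af}.
  move=> f g Hf Hg EA.
  have Est : forall k, (k <= M)%N -> states c (msf f) k = states c (msf g) k.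
    elim => [|k IH] Hk; first by [].
    apply/ffunP => l.
    have E1 := congr1 (fun A : {ffun 'I_M * 'I_n -> bool} => A (inord k, l)) EA.
    move: E1; rewrite /Af !ffunE [(inord k, l).1]/= [(inord k, l).2]/= inordK; last lia.
    rewrite (IH (ltnW Hk)).
    case: (states c (msf g) k l); case: (states c (msf f) k.+1 l);
      case: (states c (msf g) k.+1 l) => //.
  have EE : forall i, f i = g i; last first. by apply/ffunP. move=> i; apply: val_inj.
  have := Hdec f i Hf; have := Hdec g i Hg.
  rewrite Est; last exact: ltn_ord.
  by move=> -> [].
have S : forall f, f \in finfun.family F -> Af f \in
   [set A : {ffun 'I_M * 'I_n -> bool} |
     [forall i : 'I_M.+1, forall j : 'I_n.+1,
        ((i + a'.+1 <= M)%N && (j + b <= n)%N) ==>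
        (#|[set x : 'I_M * 'I_n |
             [&& A x, (i <= x.1 < i + a'.+1)%N & (j <= x.2 < j + b)%N]]| <= p)%N]].
  move=> f Hf; rewrite inE.
  apply/forallP => i; apply/forallP => j; apply/implyP => /andP [Hi Hj].
  have H := Hc (msf f) (V f Hf) i j Hj.
  apply: leq_trans H.
  pose h := fun y : 'I_a'.+1 * 'I_n => ((inord (i + y.1) : 'I_M), y.2).
  apply: leq_trans (leq_imset_card h _).
  apply: subset_leq_card.
  apply/subsetP => z; rewrite inE => /and3P [Ha Hi1 Hj1].
  apply/imsetP; exists ((inord (z.1 - i) : 'I_a'.+1), z.2).
  - rewrite inE Hj1 /=. move: Ha; rewrite /Af ffunE.
    rewrite inordK; last lia.
    by rewrite subnKC; last lia.
  - rewrite /h /= inordK; last lia.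
    rewrite subnKC; last lia.
    by rewrite inord_val; case: z {Ha Hi1 Hj1}.
have Hcard : (#|finfun.family F| <= num_arrays a'.+1 b p M n)%N.
  rewrite /num_arrays -(card_in_imset I). apply: subset_leq_card.
  apply/subsetP => A /imsetP [f Hf ->]. exact: S f Hf.
pose g j := count (fun k => leb_R (INR k.+1) (x j)) (iota 0 B).
have Hfam : #|finfun.family F| = foldr muln 1%nat (map g (iota 0 M)).
  rewrite card_family -val_enum_ord -map_comp. congr foldr.
  apply: eq_map => i. transitivity (g i); last by []. rewrite /g -cardI. apply: eq_card => k. by rewrite !inE.
pose Sm := foldr Rplus 0%R (map (fun j => INR n * r j.+1 - 1)%R (iota 0 M)).
have -> : (INR n * sum_f_R0 (fun k => r k.+1) M' - INR M = Sm)%R.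
  rewrite /Sm sum_iota.
  by rewrite (sum_lin (fun k => r k.+1) (INR n) M').
apply: log2_bound.
apply: Rle_trans (le_INR _ _ (leP Hcard)).
rewrite Hfam.
apply: (prod_bound g (fun j => INR n * r j.+1)%R).
move=> j; rewrite mem_iota => /andP [_ Hj].
apply: count_bound; first exact: x_ge1.
exact: HB.
Qed.

Theorem theorem1 (alpha beta p : nat) :
  (0 < alpha)%N -> (0 < beta)%N -> (0 < p)%N ->
  forall (Cn : nat -> R) (C C2D : R),
    (forall n : nat, (0 < n)%N -> is_lub (constrained_rates alpha beta p n) (Cn n)) ->
    Un_cv Cn C ->
    limit2 (fun m n => (log2 (INR (num_arrays alpha beta p m n)) / (INR m * INR n))%R) C2D ->
    (C <= C2D)%R.
Proof.
case: alpha => [//|a'] _ Hb Hp Cn C C2D Hlub Hcv Hlim.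
have Step : forall e, (0 < e)%R -> (C <= C2D + 3 * e)%R.
  move=> e He.
  have [N HN] := Hlim e He.
  have Bd : forall n, (N <= n)%N -> (0 < n)%N -> (Cn n <= C2D + e + / INR n)%R.
    move=> n HNn Hn0.
    have [_ Hleast] := Hlub n Hn0.
    apply: Hleast => Rt [c [Hv [Hc Hr]]].
    apply: Rnot_lt_le => Hlt.
    have Hd : (0 < Rt - (C2D + e + / INR n))%R by lra.
    have [N1 HN1] := Hr _ Hd.
    pose M' := maxn N1 N.
    have H1 := HN1 M' (leP (leq_maxl N1 N)).
    rewrite /R_dist in H1.
    have H2 := key a' beta p n c M' Hv Hc.
    have H3 := HN M'.+1 n (leq_trans (leq_maxr N1 N) (leqnSn _)) HNn.
    set S := sum_f_R0 _ M' in H1 H2.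
    set L := log2 _ in H2 H3.
    have Ha : (0 < INR M'.+1)%R by apply: lt_0_INR; apply/ltP.
    have Hn : (0 < INR n)%R by apply: lt_0_INR; apply/ltP.
    have H4 : (S / INR M'.+1 - / INR n <= L / (INR M'.+1 * INR n))%R.
      have -> : (L / (INR M'.+1 * INR n) = (S / INR M'.+1 - / INR n) +
                  (L - (INR n * S - INR M'.+1)) / (INR M'.+1 * INR n))%R.
        field; lra.
      have : (0 <= (L - (INR n * S - INR M'.+1)) / (INR M'.+1 * INR n))%R.
        apply: Rmult_le_pos; first lra. apply: Rlt_le; apply: Rinv_0_lt_compat.
        by apply: Rmult_lt_0_compat.
      lra.
    move: H1 H3; rewrite /Rabs; case: Rcase_abs; case: Rcase_abs => ? ? ? ?; lra.
  have [N2 HN2] := Hcv e He.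
  have [N3 [HN3 HN3pos]] := archimed_cor1 e He.
  pose n := maxn (maxn N N2) N3.
  have HnN : (N <= n)%N by rewrite /n; lia.
  have HnN2 : (N2 <= n)%N by rewrite /n; lia.
  have HnN3 : (N3 <= n)%N by rewrite /n; lia.
  have Hn0 : (0 < n)%N by move/ltP: HN3pos; lia.
  have Hinv : (/ INR n <= / INR N3)%R.
    apply: Rinv_le_contravar; first by apply: lt_0_INR.
    by apply: le_INR; apply/leP.
  have := Bd n HnN Hn0.
  have := HN2 n (leP HnN2).
  rewrite /R_dist /Rabs; case: Rcase_abs => ? ? ?; lra.
apply: Rnot_lt_le => H.
have := Step ((C - C2D) / 4)%R ltac:(lra).
lra.
Qed.
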